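(* Let $\lambda_1,\dots,\lambda_n>0$, $S=\{\lambda_1,\dots,\lambda_n\}$ and $\Lambda=\big(\lambda_i\lambda_j+(\lambda_i\lambda_j)^{-1}\big)_{i,j=1}^n\in P(n)$. Then: if all $\lambda_i$ are equal, $I(\Lambda)=\lambda_1^2+\lambda_1^{-2}$; if $S=\{\lambda,\mu\}$ with $\lambda\neq\mu$, then $I(\Lambda)=\dfrac{(\lambda+\mu)^2}{1+\lambda^2\mu^2}$; if $S$ has more than two elements, $I(\Lambda)=0$. In particular $I(\Lambda)\neq0$ iff $S$ has at most two elements.
   Context: $P(n)$ denotes positive semidefinite complex $n\times n$ matrices. With $P$ the all-ones $n\times n$ matrix, $I(A)=\max\{\lambda\ge0: A-\lambda P\ge0\}$. *)

(* Defs.v *)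
From HB Require Import structures.
From mathcomp Require Import all_boot all_order all_algebra.
Set Implicit Arguments. Unset Strict Implicit. Unset Printing Implicit Defensive.
Import Order.TTheory GRing.Theory Num.Theory.
Local Open Scope ring_scope.

(* Complex scalars: an arbitrary numeric algebraically closed field C
   (e.g. complex R for R a real closed field, or algC). *)

Definition ctrmx (C : numClosedFieldType) m n (A : 'M[C]_(m, n)) : 'M[C]_(n, m) :=
  (map_mx Num.conj A)^T.

(* A is positive semidefinite: v^* A v >= 0 for every complex vector v
   (in a numClosedFieldType, 0 <= z means z is real and nonnegative). *)
Definition psd (C : numClosedFieldType) n (A : 'M[C]_n) : Prop :=
  forall v : 'cV[C]_n, 0 <= (ctrmx v *m A *m v) 0 0.

Definition onesmx (C : numClosedFieldType) n : 'M[C]_n := const_mx 1.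

Definition is_I (C : numClosedFieldType) n (A : 'M[C]_n) (x : C) : Prop :=
  [/\ 0 <= x, psd (A - x *: onesmx C n)
    & forall y : C, 0 <= y -> psd (A - y *: onesmx C n) -> y <= x].

Definition Lambda (C : numClosedFieldType) n (lam : 'I_n -> C) : 'M[C]_n :=
  \matrix_(i, j) (lam i * lam j + (lam i * lam j)^-1).

(* Main.v *)
Require Import Defs.
From HB Require Import structures.
From mathcomp Require Import all_boot all_order all_algebra.
From mathcomp Require Import ring.
Import Order.TTheory GRing.Theory Num.Theory.
Local Open Scope ring_scope.

Set Implicit Arguments.
Section S.
Variable C : numClosedFieldType.

Definition Sg n (g : 'I_n -> C) (v : 'cV[C]_n) := \sum_k g k * v k 0.

Lemma conj_pos {x : C} : 0 < x -> x^* = x.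
Proof. by move=> h; apply: conj_Creal; apply: gtr0_real. Qed.

Lemma quadE n (lam : 'I_n -> C) (hpos : forall i, 0 < lam i) (t : C) (v : 'cV[C]_n) :
  (ctrmx v *m (Lambda lam - t *: onesmx C n) *m v) 0 0 =
  (Sg lam v)^* * Sg lam v + (Sg (fun k => (lam k)^-1) v)^* * Sg (fun k => (lam k)^-1) v
  - t * ((Sg (fun _ => 1) v)^* * Sg (fun _ => 1) v).
Proof.
rewrite /Sg !rmorph_sum !mulr_suml.
rewrite !mxE.
under eq_bigr => j _ do rewrite !mxE mulr_suml.
rewrite exchange_big /=.
rewrite mulr_sumr -sumrN -!big_split /=.
apply: eq_bigr => i _.
rewrite !mulr_sumr -sumrN -!big_split /=.
apply: eq_bigr => j _.
rewrite !mxE !rmorphM /=. have e1 := conj_pos (hpos i). have e2 : ((lam i)^-1)^* = (lam i)^-1 by rewrite conj_pos // invr_gt0. rewrite rmorph1 e2. rewrite e1.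
have hi := hpos i; have hj := hpos j.
have ni : lam i != 0 by rewrite gt_eqF.
have nj : lam j != 0 by rewrite gt_eqF.
rewrite invfM. ring.
Qed.

Lemma sum_delta n (g : 'I_n -> C) i : \sum_k g k * (k == i)%:R = g i.
Proof.
rewrite (bigD1 i) //= eqxx mulr1 big1 ?addr0 // => k /negbTE ->; by rewrite mulr0.
Qed.

Lemma Sg_col n (g : 'I_n -> C) (f : 'I_n -> C) : Sg g (\col_k f k) = \sum_k g k * f k.
Proof. by apply: eq_bigr => k _; rewrite mxE. Qed.

Lemma sum2 n (g : 'I_n -> C) i j a b :
  \sum_k g k * ((k == i)%:R * a + (k == j)%:R * b) = g i * a + g j * b.
Proof.
rewrite -(sum_delta g i) -(sum_delta g j) !mulr_suml -big_split /=.
by apply: eq_bigr => k _; rewrite mulrDr !mulrA.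
Qed.

Lemma sum3 n (g : 'I_n -> C) i j l a b c :
  \sum_k g k * ((k == i)%:R * a + (k == j)%:R * b + (k == l)%:R * c)
    = g i * a + g j * b + g l * c.
Proof.
rewrite -(sum_delta g i) -(sum_delta g j) -(sum_delta g l) !mulr_suml -!big_split /=.
by apply: eq_bigr => k _; rewrite !mulrDr !mulrA.
Qed.

Lemma psd_at n (lam : 'I_n -> C) (hpos : forall i, 0 < lam i) y (f : 'I_n -> C) :
  psd (Lambda lam - y *: onesmx C n) ->
  let X := \sum_k lam k * f k in
  let Y := \sum_k (lam k)^-1 * f k in
  let E := \sum_k 1 * f k in
  0 <= X^* * X + Y^* * Y - y * (E^* * E).
Proof.
move=> /(_ (\col_k f k)); rewrite quadE // !Sg_col //.
Qed.

Lemma le_inv (s y : C) : 0 < s -> 0 <= s - y * (s * s) -> y <= s^-1.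
Proof.
move=> sp; rewrite subr_ge0 => h.
rewrite -(ler_pM2r sp) mulVf ?gt_eqF //.
rewrite -(ler_pM2r sp) mul1r -mulrA //.
Qed.


Lemma case1 n (lam : 'I_n -> C) (hpos : forall i, 0 < lam i) (hn : (0 < n)%N) l :
  (forall i, lam i = l) -> is_I (Lambda lam) (l ^+ 2 + l ^- 2).
Proof.
move=> hl; pose i0 := Ordinal hn.
have lp : 0 < l by rewrite -(hl i0).
have l0 : l != 0 by rewrite gt_eqF.
have cl : l^* = l by apply: conj_pos.
have cli : (l^-1)^* = l^-1 by apply: conj_pos; rewrite invr_gt0.
split.
- by rewrite addr_ge0 // ?invr_ge0 exprn_ge0 // ltW.
- move=> v; rewrite quadE //.
  have -> : Sg lam v = l * Sg (fun _ => 1) v.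
    by rewrite /Sg mulr_sumr; apply: eq_bigr => k _; rewrite hl mul1r.
  have -> : Sg (fun k => (lam k)^-1) v = l^-1 * Sg (fun _ => 1) v.
    by rewrite /Sg mulr_sumr; apply: eq_bigr => k _; rewrite hl mul1r.
  rewrite !rmorphM /= cl cli.
  set E := Sg _ v; set F := E^*.
  have -> : l * F * (l * E) + l^-1 * F * (l^-1 * E) - (l ^+ 2 + l ^- 2) * (F * E) = 0.
    by field.
  by [].
- move=> y y0 /(psd_at hpos (fun k => (k == i0)%:R)).
  rewrite /= !sum_delta hl rmorph1 cl cli !mulr1 => h.
  rewrite -subr_ge0; move: h; congr (0 <= _ - _); by field.
Qed.


Lemma case3 n (lam : 'I_n -> C) (hpos : forall i, 0 < lam i) i j l :
  lam i != lam j -> lam j != lam l -> lam l != lam i ->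
  is_I (Lambda lam) 0.
Proof.
move=> hij hjl hli.
split => //.
- move=> v; rewrite quadE // mul0r subr0.
  by rewrite addr_ge0 // mulrC mul_conjC_ge0.
- move=> y y0.
  set x := lam i; set z := lam j; set w := lam l.
  move=> /(psd_at hpos (fun k => (k == i)%:R * (x * (z^+2 - w^+2))
        + (k == j)%:R * (z * (w^+2 - x^+2)) + (k == l)%:R * (w * (x^+2 - z^+2)))).
  rewrite /= !sum3 -/x -/z -/w.
  have x0 : x != 0 by rewrite /x gt_eqF.
  have z0 : z != 0 by rewrite /z gt_eqF.
  have w0 : w != 0 by rewrite /w gt_eqF.
  have -> : x * (x * (z ^+ 2 - w ^+ 2)) + z * (z * (w ^+ 2 - x ^+ 2)) +
      w * (w * (x ^+ 2 - z ^+ 2)) = 0 by ring.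
  have -> : x^-1 * (x * (z ^+ 2 - w ^+ 2)) + z^-1 * (z * (w ^+ 2 - x ^+ 2)) +
      w^-1 * (w * (x ^+ 2 - z ^+ 2)) = 0 by field; rewrite x0 z0 w0.
  have -> : 1 * (x * (z ^+ 2 - w ^+ 2)) + 1 * (z * (w ^+ 2 - x ^+ 2)) +
      1 * (w * (x ^+ 2 - z ^+ 2)) = (x - z) * (z - w) * (w - x) by ring.
  set E := (x - z) * (z - w) * (w - x).
  have E0 : E != 0 by rewrite !mulf_neq0 // subr_eq0 // eq_sym.
  rewrite rmorph0 !mul0r !add0r -mulNr.
  rewrite pmulr_lge0; last by rewrite mulrC mul_conjC_gt0.
  by rewrite oppr_ge0.
Qed.


Lemma case2 n (lam : 'I_n -> C) (hpos : forall i, 0 < lam i) l m i j :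
  l != m -> (forall k, lam k = l \/ lam k = m) -> lam i = l -> lam j = m ->
  is_I (Lambda lam) ((l + m) ^+ 2 / (1 + l ^+ 2 * m ^+ 2)).
Proof.
move=> lm hl hi hj.
have lp : 0 < l by rewrite -hi.
have mp : 0 < m by rewrite -hj.
have l0 : l != 0 by rewrite gt_eqF.
have m0 : m != 0 by rewrite gt_eqF.
have lmp : 0 < l + m by rewrite addr_gt0.
have lm0 : l + m != 0 by rewrite gt_eqF.
have dp : 0 < 1 + l ^+ 2 * m ^+ 2 by rewrite addr_gt0 ?ltr01 // mulr_gt0 // exprn_gt0.
have d0 : 1 + l ^+ 2 * m ^+ 2 != 0 by rewrite gt_eqF.
have xp : 0 <= (l + m) ^+ 2 / (1 + l ^+ 2 * m ^+ 2).
  by rewrite divr_ge0 // ltW // exprn_gt0.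
have [a ea] : exists a, a = (l + m)^-1 by exists (l + m)^-1.
have [b eb] : exists b, b = l * m / (l + m) by exists (l * m / (l + m)).
have ap : 0 < a by rewrite ea invr_gt0.
have bp : 0 < b by rewrite eb divr_gt0 // mulr_gt0.
have ca : a^* = a by apply: conj_pos.
have cb : b^* = b by apply: conj_pos.
split => //.
- move=> v; rewrite quadE //.
  have -> : Sg (fun _ => 1) v = a * Sg lam v + b * Sg (fun k => (lam k)^-1) v.
    rewrite /Sg !mulr_sumr -big_split /=; apply: eq_bigr => k _.
    by case: (hl k) => ->; rewrite ea eb /=; field; rewrite ?l0 ?m0 ?lm0.
  set X := Sg lam v; set Y := Sg _ v.
  have -> : X^* * X + Y^* * Y - (l + m) ^+ 2 / (1 + l ^+ 2 * m ^+ 2) * ((a * X + b * Y)^* * (a * X + b * Y))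
     = (l + m) ^+ 2 / (1 + l ^+ 2 * m ^+ 2) * ((b * X - a * Y) * (b * X - a * Y)^*).
    rewrite rmorphB rmorphD !rmorphM /= ca cb ea eb.
    by field; rewrite ?l0 ?m0 ?lm0 ?exprMn ?d0.
  by rewrite mulr_ge0 // mul_conjC_ge0.
- move=> y y0.
  pose al := (a * l - m * (l * m * b)) / (l ^+ 2 - m ^+ 2).
  pose be := (l * (l * m * b) - m * a) / (l ^+ 2 - m ^+ 2).
  move=> /(psd_at hpos (fun k => (k == i)%:R * al + (k == j)%:R * be)).
  rewrite /= !sum2 hi hj.
  have q0 : l ^+ 2 - m ^+ 2 != 0.
    have -> : l ^+ 2 - m ^+ 2 = (l - m) * (l + m) by ring.
    by rewrite mulf_neq0 // subr_eq0.
  have -> : l * al + m * be = a by rewrite /al /be; field; rewrite ?q0.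
  have -> : l^-1 * al + m^-1 * be = b.
    by rewrite /al /be ea eb; field; rewrite ?q0 ?l0 ?m0 ?lm0.
  have -> : 1 * al + 1 * be = a * a + b * b.
    by rewrite /al /be ea eb; field; rewrite ?q0 ?l0 ?m0 ?lm0.
  have sp : 0 < a * a + b * b by rewrite addr_gt0 // mulr_gt0.
  rewrite ca cb (conj_pos sp) => h.
  have -> : (l + m) ^+ 2 / (1 + l ^+ 2 * m ^+ 2) = (a * a + b * b)^-1.
    rewrite ea eb; field; rewrite lm0 /=; by rewrite -expr2 exprMn.
  by apply: le_inv.
Qed.


Lemma undup_mem n (lam : 'I_n -> C) x : x \in undup (codom lam) -> exists i, lam i = x.
Proof. by rewrite mem_undup => /codomP [i ->]; exists i. Qed.

Lemma three n (lam : 'I_n -> C) : (2 < size (undup (codom lam)))%N ->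
  exists i j l, [/\ lam i != lam j, lam j != lam l & lam l != lam i].
Proof.
move=> H.
have U := undup_uniq (codom lam).
have M := @undup_mem n lam.
move: U M H; case: (undup (codom lam)) => [|a [|b [|c s]]] //= U M _.
have [i ei] := M a (mem_head _ _).
have [j ej] : exists j, lam j = b by apply: M; rewrite !inE eqxx orbT.
have [k ek] : exists k, lam k = c by apply: M; rewrite !inE eqxx !orbT.
move: U; rewrite !inE !negb_or => /and4P [/andP[ab /andP[ac _]] /andP[bc _] _ _].
exists i, j, k; rewrite ei ej ek; split => //; by rewrite eq_sym.
Qed.

Lemma le2 n (lam : 'I_n -> C) (hpos : forall i, 0 < lam i) (hn : (0 < n)%N) :
  (size (undup (codom lam)) <= 2)%N -> exists x, is_I (Lambda lam) x /\ x != 0.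
Proof.
move=> H.
have U := undup_uniq (codom lam).
have M := @undup_mem n lam.
have A : forall k, lam k \in undup (codom lam) by move=> k; rewrite mem_undup codom_f.
move: U M H A; case: (undup (codom lam)) => [|a [|b [|c s]]] //= U M _ A.
- by have := A (Ordinal hn).
- have hl : forall k, lam k = a by move=> k; have := A k; rewrite inE => /eqP.
  have [i ei] := M a (mem_head _ _).
  have ap : 0 < a by rewrite -ei.
  exists (a ^+ 2 + a ^- 2); split; first exact: case1.
  by rewrite gt_eqF // addr_gt0 // ?invr_gt0 exprn_gt0.
- have hl : forall k, lam k = a \/ lam k = b.
    by move=> k; have := A k; rewrite !inE => /orP [/eqP|/eqP]; auto.
  have [i ei] := M a (mem_head _ _).
  have [j ej] : exists j, lam j = b by apply: M; rewrite !inE eqxx orbT.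
  have ap : 0 < a by rewrite -ei.
  have bp : 0 < b by rewrite -ej.
  have ab : a != b by move: U; rewrite !inE andbT.
  exists ((a + b) ^+ 2 / (1 + a ^+ 2 * b ^+ 2)); split; first exact: (case2 lam hpos i j ab hl ei ej).
  by rewrite gt_eqF // divr_gt0 // ?exprn_gt0 ?addr_gt0 // ?ltr01 // mulr_gt0 // exprn_gt0.
Qed.

End S.

Theorem mainTheorem13 (C : numClosedFieldType) (n : nat) (lam : 'I_n -> C)
    (hn : (0 < n)%N) (hpos : forall i, 0 < lam i) :
  (* all lambda_i equal (to l = lambda_1) *)
  (forall l : C, (forall i, lam i = l) ->
     is_I (Lambda lam) (l ^+ 2 + l ^- 2)) /\
  (* S = {l, m} with l <> m *)
  (forall l m : C, l != m ->
     (forall i, lam i = l \/ lam i = m) ->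
     (exists i, lam i = l) -> (exists j, lam j = m) ->
     is_I (Lambda lam) ((l + m) ^+ 2 / (1 + l ^+ 2 * m ^+ 2))) /\
  (* S has more than two elements *)
  ((2 < size (undup (codom lam)))%N -> is_I (Lambda lam) 0) /\
  (* in particular *)
  ((exists x, is_I (Lambda lam) x /\ x != 0) <->
     (size (undup (codom lam)) <= 2)%N).
Proof.
have h3 : (2 < size (undup (codom lam)))%N -> is_I (Lambda lam) 0.
  by move=> /three [i [j [l [a b c]]]]; exact: (@case3 C n lam hpos i j l a b c).
split; first by move=> l hl; exact: (@case1 C n lam hpos hn l hl).
split; first by move=> l m lm hl [i hi] [j hj]; exact: (@case2 C n lam hpos l m i j lm hl hi hj).
split => //.
split; last exact: (@le2 C n lam hpos hn).
move=> [x [[x0 px _] nx]].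
rewrite leqNgt; apply/negP => /h3 [_ _ h].
move: nx; have := h x x0 px => xle.
by rewrite (@le_anti _ _ x 0) ?xle ?x0 ?eqxx.
Qed.
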